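(* For every integer $n\ge 4$, \[ R_n(x)=\begin{cases} xR_{n-1}(x)+R_{n-2}(x), & \text{if } n \text{ is odd},\\ R_{n-1}(x)+x^2R_{n-2}(x), & \text{if } n \text{ is even}.\end{cases} \]
   Context: For $n\ge1$ let $\Xi_n$ (the $L$-fence) be the poset on $\{x_1,\dots,x_n\}$ whose cover relations are exactly: $x_2\prec x_1$, $x_3\prec x_2$, and for $3\le i\le n-1$, $x_i\prec x_{i+1}$ if $i$ is odd and $x_{i+1}\prec x_i$ if $i$ is even (so $x_1>x_2>x_3<x_4>x_5<\cdots$). A filter of a poset $P$ is a subset $F$ with $x\in F$, $x\le y\Rightarrow y\in F$. $\Omega_n$ is the lattice of filters of $\Xi_n$ ordered by reverse inclusion; $\Omega_0$ is the one-element lattice. The rank generating function of $\Omega_n$ is $R_n(x)=\sum_{F\in\Omega_n}x^{\,n-|F|}$, with $R_0(x)=1$. *)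

(* Defs.v *)
From mathcomp Require Import all_boot all_order all_algebra.
Unset Strict Implicit. Unset Printing Implicit Defensive.
Import GRing.Theory.
Local Open Scope ring_scope.

(* The element a : 'I_n of the L-fence represents x_(a+1).
   fence_cov n a b  <=>  x_(a+1) is covered by x_(b+1)  (x_(a+1) ≺ x_(b+1)). *)
Definition fence_cov (n : nat) : rel 'I_n := fun a b =>
  let i := (a + 1)%N in let j := (b + 1)%N in
  [|| (i == 2) && (j == 1),
      (i == 3) && (j == 2),
      [&& (3 <= i)%N, j == i.+1 & odd i]
    | [&& (3 <= j)%N, i == j.+1 & ~~ odd j] ].

Definition fence_le (n : nat) : rel 'I_n := connect (fence_cov n).

Definition is_filter (n : nat) (F : {set 'I_n}) : bool :=
  [forall x : 'I_n, forall y : 'I_n, (x \in F) && fence_le n x y ==> (y \in F)].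

Definition rankGF (n : nat) : {poly int} :=
  \sum_(F : {set 'I_n} | is_filter n F) 'X^(n - #|F|).

(* Main.v *)
Require Import Defs.
From mathcomp Require Import all_boot all_order all_algebra.
From mathcomp Require Import zify.
Import GRing.Theory.
Local Open Scope ring_scope.

Definition covn (a b : nat) : bool :=
  let i := (a + 1)%N in let j := (b + 1)%N in
  [|| (i == 2) && (j == 1),
      (i == 3) && (j == 2),
      [&& (3 <= i)%N, j == i.+1 & odd i]
    | [&& (3 <= j)%N, i == j.+1 & ~~ odd j] ].

Lemma covn_near a b : covn a b -> (a == b.+1) || (b == a.+1).
Proof.
rewrite /covn => /or4P [/andP[/eqP h1 /eqP h2]|/andP[/eqP h1 /eqP h2]
  |/and3P[_ /eqP h _]|/and3P[_ /eqP h _]];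
 apply/orP; [left|left|right|left]; apply/eqP; lia.
Qed.

Lemma covn_top1 m : covn m.+1 m = ~~ (odd m.+1 && (3 <= m.+1)%N).
Proof.
rewrite /covn; case: m => [|[|m]] //=.
rewrite !addn1 /=.
have -> : (m.+4 == m.+3.+1) = true by rewrite eqxx.
case: (odd m) => /=; by rewrite ?orbT ?andbF ?orbF ?andbT.
Qed.

Lemma covn_top2 m : covn m m.+1 = odd m.+1 && (3 <= m.+1)%N.
Proof.
rewrite /covn; case: m => [|[|m]] //=.
rewrite !addn1 /=.
have -> : (m.+4 == m.+3.+1) = true by rewrite eqxx.
case: (odd m) => /=; by rewrite ?orbT ?andbF ?orbF ?andbT.
Qed.

Definition fm n (F : {set 'I_n}) (k : nat) : bool :=
  [exists j : 'I_n, (j \in F) && (val j == k)].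
Arguments fm {n}.

Lemma fm_ge n (F : {set 'I_n}) k : (n <= k)%N -> fm F k = false.
Proof.
move=> hk; apply/existsP => -[j /andP[_ /eqP e]].
have := ltn_ord j; rewrite e; lia.
Qed.

Lemma fmE n (F : {set 'I_n}) (j : 'I_n) : fm F j = (j \in F).
Proof.
apply/existsP/idP => [[j' /andP[h /eqP e]]|h].
  by have -> : j = j' by apply: val_inj.
by exists j; rewrite h eqxx.
Qed.

Definition PFilt n (f : nat -> bool) : Prop :=
  forall a b, (a < n)%N -> (b < n)%N -> covn a b -> f a -> f b.

Lemma filterP n (F : {set 'I_n}) : is_filter n F <-> PFilt n (fm F).
Proof.
split.
  move=> /forallP H a b ha hb hc hf.
  have := H (Ordinal ha) => /forallP /(_ (Ordinal hb)) /implyP.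
  rewrite -[fm F b]/(fm F (val (Ordinal hb))) fmE; apply; apply/andP; split.
    by rewrite -fmE.
  by apply: connect1.
move=> H; apply/forallP => x; apply/forallP => y; apply/implyP.
move=> /andP[hx /connectP[p hp ->]].
elim: p x hx hp => //= z p IH x hx /andP[hc hp].
apply: IH hp; rewrite -fmE; apply: (H x z) => //; by rewrite fmE.
Qed.

Lemma PFilt_eq n f g : (forall k, (k < n)%N -> f k = g k) -> PFilt n f -> PFilt n g.
Proof.
move=> e H a b ha hb hc; rewrite -e // -e //; exact: H.
Qed.

Lemma PFiltS m f : PFilt m.+2 f <-> PFilt m.+1 f /\
  (if odd m.+1 && (3 <= m.+1)%N then f m -> f m.+1 else f m.+1 -> f m).
Proof.
split.
  move=> H; split.
    by move=> a b ha hb; apply: H; lia.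
  case: ifP => hc.
    by apply: H => //; rewrite covn_top2.
  by apply: H => //; rewrite covn_top1 hc.
move=> [H1 H2] a b ha hb hc.
case: (ltnP a m.+1) => ha'; case: (ltnP b m.+1) => hb'; first by apply: H1.
all: have /orP[/eqP e|/eqP e] := covn_near _ _ hc; try lia.
- have ea : a = m by lia.
  have eb : b = m.+1 by lia.
  subst a b; move: hc; rewrite covn_top2 => hc; rewrite hc in H2; exact: H2.
- have ea : a = m.+1 by lia.
  have eb : b = m by lia.
  subst a b; move: hc; rewrite covn_top1 => /negbTE hc; rewrite hc in H2; exact: H2.
Qed.

Definition ext n (S : {set 'I_n}) (b : bool) : {set 'I_n.+1} :=
  [set i : 'I_n.+1 | if val i == n then b else fm S i].
Arguments ext {n}.

Definition res n (F : {set 'I_n.+1}) : {set 'I_n} := [set j : 'I_n | fm F j].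
Arguments res {n}.

Lemma fm_ext n (S : {set 'I_n}) b k : fm (ext S b) k = if k == n then b else fm S k.
Proof.
case: (ltnP k n.+1) => hk.
  by rewrite -[fm _ k]/(fm (ext S b) (val (Ordinal hk))) fmE inE.
have -> : (k == n) = false by apply/eqP; lia.
by rewrite !fm_ge //; lia.
Qed.

Lemma res_ext n (S : {set 'I_n}) b : res (ext S b) = S.
Proof.
apply/setP => j; rewrite inE fm_ext.
by rewrite (ltn_eqF (ltn_ord j)) fmE.
Qed.

Lemma ext_max n (S : {set 'I_n}) b : (ord_max \in ext S b) = b.
Proof. by rewrite inE /= eqxx. Qed.

Lemma ext_res n (F : {set 'I_n.+1}) : ext (res F) (ord_max \in F) = F.
Proof.
apply/setP => i; rewrite inE; case: eqP => e.
  by have -> : i = ord_max by apply: val_inj.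
have hi : (i < n)%N by rewrite ltn_neqAle -ltnS ltn_ord andbT; exact/eqP.
rewrite -[fm _ i]/(fm (res F) (val (Ordinal hi))) fmE inE.
by rewrite -[fm _ _]/(fm F (val i)) fmE.
Qed.

Lemma card_ext n (S : {set 'I_n}) b : #|ext S b| = (#|S| + b)%N.
Proof.
rewrite -!sum1_card !(big_mkcond (fun i => i \in _)) big_ord_recr /= ext_max.
have -> : (if b then 1 else 0)%N = nat_of_bool b by case: b.
congr addn.
apply: eq_bigr => i _; rewrite inE /=.
rewrite (ltn_eqF (ltn_ord i)).
by rewrite -[fm _ _]/(fm S (val i)) fmE.
Qed.

Lemma split_sum n (h : {set 'I_n.+1} -> {poly int}) :
  \sum_(F : {set 'I_n.+1}) h F = \sum_(S : {set 'I_n}) (h (ext S true) + h (ext S false)).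
Proof.
rewrite (reindex (fun p : {set 'I_n} * bool => ext p.1 p.2)) /=; last first.
  apply: onW_bij; exists (fun F => (res F, ord_max \in F)).
    by case=> S b /=; rewrite res_ext ext_max.
  by move=> F /=; exact: ext_res.
rewrite -(pair_big xpredT xpredT (fun S b => h (ext S b))) /=.
by apply: eq_bigr => S _; rewrite big_bool.
Qed.

Definition condb m (S : {set 'I_m.+1}) (b : bool) : bool :=
  if odd m.+1 && (3 <= m.+1)%N then fm S m ==> b else b ==> fm S m.
Arguments condb {m}.

Lemma filter_ext m (S : {set 'I_m.+1}) b :
  is_filter m.+2 (ext S b) = is_filter m.+1 S && condb S b.
Proof.
apply/idP/idP.
  move=> /filterP /PFiltS [H1 H2]; apply/andP; split.
    apply/filterP; apply: PFilt_eq H1 => k hk.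
    by rewrite fm_ext (ltn_eqF hk).
  move: H2; rewrite /condb !fm_ext eqxx (ltn_eqF (ltnSn m)).
  by case: ifP => _ h; apply/implyP.
move=> /andP[/filterP H1 H2]; apply/filterP; apply/PFiltS; split.
  apply: PFilt_eq H1 => k hk.
  by rewrite fm_ext (ltn_eqF hk).
rewrite !fm_ext eqxx (ltn_eqF (ltnSn m)).
by move: H2; rewrite /condb; case: ifP => _ /implyP.
Qed.

Lemma step m (P : {set 'I_m.+2} -> bool) :
  \sum_(F : {set 'I_m.+2} | is_filter m.+2 F && P F) 'X^(m.+2 - #|F|)
  = \sum_(S : {set 'I_m.+1} | is_filter m.+1 S && condb S true && P (ext S true))
       'X^(m.+1 - #|S|)
  + \sum_(S : {set 'I_m.+1} | is_filter m.+1 S && condb S false && P (ext S false))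
       ('X^(m.+1 - #|S|) * 'X) :> {poly int}.
Proof.
rewrite big_mkcond split_sum /= big_split /=.
congr (_ + _); rewrite [RHS]big_mkcond; apply: eq_bigr => S _;
  rewrite filter_ext card_ext -andbA; case: ifP => // _;
  have := max_card S; rewrite card_ord => hS /=.
- by rewrite addn1 subSS.
- by rewrite -exprSr addn0 subSn.
Qed.

Lemma rankE N : rankGF N = \sum_(F : {set 'I_N} | is_filter N F && true) 'X^(N - #|F|).
Proof. by apply: eq_bigl => F; rewrite andbT. Qed.

Theorem mainTheorem2 (n : nat) : (4 <= n)%N ->
  rankGF n = if odd n then 'X * rankGF n.-1 + rankGF n.-2
             else rankGF n.-1 + 'X^2 * rankGF n.-2.
Proof.
move=> hn; have [k ->] : exists k, n = k.+4 by exists (n - 4)%N; lia.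
rewrite /= {1}rankE step /condb /= !negbK.
have -> : (2 < k.+3)%N = true by [].
case hk: (odd k) => /=.
- rewrite addrC; congr (_ + _).
    rewrite /rankGF mulr_sumr; apply: eq_big => [S|S _]; first by rewrite !andbT.
    by rewrite mulrC.
  rewrite (eq_bigl (fun S => is_filter k.+3 S && (fun S => fm S k.+2) S)); last first.
    by move=> S; rewrite andbT.
  rewrite step.
  under eq_bigl => T do rewrite fm_ext eqxx.
  under [X in _ + X]eq_bigl => T do rewrite fm_ext eqxx.
  rewrite [X in _ + X]big_pred0; last by move=> T; rewrite andbF.
  rewrite addr0; apply: eq_bigl => T; rewrite /condb /= hk /=.
  have -> : (2 < k.+2)%N by case: (k) hk.
  by rewrite implybT !andbT.
- congr (_ + _).
    by apply: eq_bigl => S; rewrite implybT !andbT.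
  rewrite (eq_bigl (fun S => is_filter k.+3 S && (fun S => ~~ fm S k.+2) S)); last first.
    by move=> S; rewrite andbT implybF.
  rewrite -mulr_suml step.
  under eq_bigl => T do rewrite fm_ext eqxx.
  under [X in _ + X]eq_bigl => T do rewrite fm_ext eqxx.
  rewrite [X in X + _]big_pred0; last by move=> T; rewrite andbF.
  rewrite [0 + _]add0r -mulr_suml -mulrA -expr2 mulrC; congr (_ * _).
  rewrite /rankGF; apply: eq_bigl => T; rewrite /condb /= hk /=.
  by rewrite !andbT.
Qed.
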